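(* Let $A$ be a modal formula and let $t$ be a translation for $A$ based on a sequence $Q=\{q_i\}_{i=0}^\infty$ of atoms not occurring in $A$. If $\mathbf{GL}\vdash A^t$, then $\mathbf{K4}\vdash A$.
   Context: Modal formulas are built from atoms and $\bot$ using $\wedge,\vee,\to,\neg,\Box$. $\mathbf{K4}$ is the normal modal logic with axioms $\mathbf{K}$ and $\Box A\to\Box\Box A$; $\mathbf{GL}$ is $\mathbf{K4}$ plus Löb's axiom $\Box(\Box A\to A)\to\Box A$. A translation $t$ for $A$ based on $Q$ is an assignment of natural numbers to the occurrences of $\Box$ in $A$ such that the number assigned to any box occurrence is greater than the numbers assigned to all box occurrences within its scope. $A^t$ is defined by: $p^t=p$ for atoms; $(B\circ C)^t=B^t\circ C^t$ for $\circ\in\{\wedge,\vee,\to\}$; $(\neg B)^t=\neg B^t$; $(\Box B)^t=\Box(\bigwedge_{i=0}^n q_i\to B^t)$ where $n$ is the number $t$ assigns to that box occurrence. *)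

(* Defs.v *)
From Stdlib Require Import Arith List Bool.

Inductive form : Type :=
| Atom : nat -> form
| Bot : form
| And : form -> form -> form
| Or : form -> form -> form
| Imp : form -> form -> form
| Neg : form -> form
| Box : form -> form.

Fixpoint occurs (p : nat) (A : form) : Prop :=
  match A with
  | Atom q => p = q
  | Bot => False
  | And B C | Or B C | Imp B C => occurs p B \/ occurs p C
  | Neg B | Box B => occurs p B
  end.

(* Propositional (boolean) evaluation, with boxed formulas treated as
   propositional atoms: va values atoms, vb values formulas of the form Box B. *)
Fixpoint tval (va : nat -> bool) (vb : form -> bool) (A : form) : bool :=
  match A with
  | Atom p => va p
  | Bot => false
  | And B C => tval va vb B && tval va vb C
  | Or B C => tval va vb B || tval va vb C
  | Imp B C => implb (tval va vb B) (tval va vb C)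
  | Neg B => negb (tval va vb B)
  | Box B => vb B
  end.

Definition tautology (A : form) : Prop :=
  forall va vb, tval va vb A = true.

Inductive K4_prv : form -> Prop :=
| K4_taut A : tautology A -> K4_prv A
| K4_K A B : K4_prv (Imp (Box (Imp A B)) (Imp (Box A) (Box B)))
| K4_4 A : K4_prv (Imp (Box A) (Box (Box A)))
| K4_mp A B : K4_prv (Imp A B) -> K4_prv A -> K4_prv B
| K4_nec A : K4_prv A -> K4_prv (Box A).

Inductive GL_prv : form -> Prop :=
| GL_taut A : tautology A -> GL_prv A
| GL_K A B : GL_prv (Imp (Box (Imp A B)) (Imp (Box A) (Box B)))
| GL_4 A : GL_prv (Imp (Box A) (Box (Box A)))
| GL_Lob A : GL_prv (Imp (Box (Imp (Box A) A)) (Box A))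
| GL_mp A B : GL_prv (Imp A B) -> GL_prv A -> GL_prv B
| GL_nec A : GL_prv A -> GL_prv (Box A).

(* A formula whose box occurrences are annotated with natural numbers:
   this is how we represent an assignment t of numbers to box occurrences. *)
Inductive aform : Type :=
| AAtom : nat -> aform
| ABot : aform
| AAnd : aform -> aform -> aform
| AOr : aform -> aform -> aform
| AImp : aform -> aform -> aform
| ANeg : aform -> aform
| ABox : nat -> aform -> aform.

Fixpoint erase (T : aform) : form :=
  match T with
  | AAtom p => Atom p
  | ABot => Bot
  | AAnd B C => And (erase B) (erase C)
  | AOr B C => Or (erase B) (erase C)
  | AImp B C => Imp (erase B) (erase C)
  | ANeg B => Neg (erase B)
  | ABox _ B => Box (erase B)
  end.

Fixpoint boxes_below (n : nat) (T : aform) : Prop :=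
  match T with
  | AAtom _ | ABot => True
  | AAnd B C | AOr B C | AImp B C => boxes_below n B /\ boxes_below n C
  | ANeg B => boxes_below n B
  | ABox m B => m < n /\ boxes_below n B
  end.

Fixpoint wf_transl (T : aform) : Prop :=
  match T with
  | AAtom _ | ABot => True
  | AAnd B C | AOr B C | AImp B C => wf_transl B /\ wf_transl C
  | ANeg B => wf_transl B
  | ABox m B => boxes_below m B /\ wf_transl B
  end.

Definition translation_for (A : form) (t : aform) : Prop :=
  erase t = A /\ wf_transl t.

Fixpoint bigconj (q : nat -> nat) (n : nat) : form :=
  match n with
  | 0 => Atom (q 0)
  | S k => And (bigconj q k) (Atom (q (S k)))
  end.

Fixpoint apply_transl (q : nat -> nat) (T : aform) : form :=
  match T with
  | AAtom p => Atom p
  | ABot => Bot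
  | AAnd B C => And (apply_transl q B) (apply_transl q C)
  | AOr B C => Or (apply_transl q B) (apply_transl q C)
  | AImp B C => Imp (apply_transl q B) (apply_transl q C)
  | ANeg B => Neg (apply_transl q B)
  | ABox n B => Box (Imp (bigconj q n) (apply_transl q B))
  end.

(* Main.v *)
Require Import Defs.
From Stdlib Require Import Arith List Bool Lia Classical ClassicalEpsilon Wellfounded.
Import ListNotations.

Fixpoint conj (l : list form) : form :=
  match l with [] => Neg Bot | x :: l' => And x (conj l') end.

Lemma tval_conj_app va vb l1 l2 :
  tval va vb (conj (l1 ++ l2)) = tval va vb (conj l1) && tval va vb (conj l2).
Proof. induction l1; simpl; [reflexivity|]. rewrite IHl1, andb_assoc; reflexivity. Qed.

Ltac taut_solve := unfold tautology; intros va vb; simpl; repeat rewrite ?tval_conj_app;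
  repeat match goal with
  | |- context [tval va vb ?X] => destruct (tval va vb X)
  | |- context [vb ?X] => destruct (vb X)
  | |- context [va ?X] => destruct (va X) end; reflexivity.

Lemma tmp1 F G : tautology (Imp F G) -> K4_prv F -> K4_prv G.
Proof. intros; eapply K4_mp; [apply K4_taut|]; eauto. Qed.
Lemma tmp2 F1 F2 G : tautology (Imp F1 (Imp F2 G)) -> K4_prv F1 -> K4_prv F2 -> K4_prv G.
Proof. intros; eapply K4_mp; [eapply K4_mp; [apply K4_taut|]|]; eauto. Qed.
Lemma tmp3 F1 F2 F3 G : tautology (Imp F1 (Imp F2 (Imp F3 G))) ->
  K4_prv F1 -> K4_prv F2 -> K4_prv F3 -> K4_prv G.
Proof. intros; eapply K4_mp; [eapply tmp2|]; eauto. Qed.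
Lemma tmp4 F1 F2 F3 F4 G : tautology (Imp F1 (Imp F2 (Imp F3 (Imp F4 G)))) ->
  K4_prv F1 -> K4_prv F2 -> K4_prv F3 -> K4_prv F4 -> K4_prv G.
Proof. intros; eapply K4_mp; [eapply tmp3|]; eauto. Qed.

Lemma boxK1 X Y : K4_prv (Imp X Y) -> K4_prv (Imp (Box X) (Box Y)).
Proof. intros H; eapply K4_mp; [apply K4_K| apply K4_nec; exact H]. Qed.
Lemma boxK2 X Y Z : K4_prv (Imp X (Imp Y Z)) -> K4_prv (Imp (Box X) (Imp (Box Y) (Box Z))).
Proof.
  intros H. apply boxK1 in H.
  eapply tmp2; [|exact H|apply (K4_K Y Z)]. taut_solve.
Qed.

Definition cons (S : form -> Prop) : Prop :=
  forall l, (forall x, In x l -> S x) -> ~ K4_prv (Neg (conj l)).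

Lemma split_lem (S : form -> Prop) phi : forall l, (forall x, In x l -> S x \/ x = phi) ->
  exists l', (forall x, In x l' -> S x) /\ K4_prv (Imp (conj l') (Imp phi (conj l))).
Proof.
  induction l as [|x l IH]; intros H.
  - exists []; split; [simpl; tauto|]. apply K4_taut; taut_solve.
  - destruct IH as [l' [H1 H2]]. { intros y Hy; apply H; simpl; auto. }
    destruct (H x (or_introl eq_refl)) as [Hx|Hx].
    + exists (x :: l'); split. { intros y [<-|Hy]; auto. }
      eapply tmp1; [|exact H2]. taut_solve.
    + subst x. exists l'; split; auto. eapply tmp1; [|exact H2]. taut_solve.
Qed.

Lemma cons_step S phi : cons S ->
  cons (fun x => S x \/ x = phi) \/ cons (fun x => S x \/ x = Neg phi).
Proof.
  intros HS. destruct (classic (cons (fun x => S x \/ x = phi))) as [H|H]; [left; auto|right].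
  intros l2 Hl2 Hp2. apply H. intros l1 Hl1 Hp1.
  destruct (split_lem S phi l1 Hl1) as [l1' [A1 B1]].
  destruct (split_lem S (Neg phi) l2 Hl2) as [l2' [A2 B2]].
  apply (HS (l1' ++ l2')).
  - intros x Hx; apply in_app_or in Hx; destruct Hx; auto.
  - eapply tmp4; [|exact B1|exact Hp1|exact B2|exact Hp2]. taut_solve.
Qed.

Fixpoint ext (S : form -> Prop) (l : list form) : form -> Prop :=
  match l with
  | [] => S
  | phi :: l' =>
      let S' := ext S l' in
      if excluded_middle_informative (cons (fun x => S' x \/ x = phi))
      then (fun x => S' x \/ x = phi) else (fun x => S' x \/ x = Neg phi)
  end.

Lemma ext_sub S l : forall x, S x -> ext S l x.
Proof.
  induction l; simpl; intros; auto.
  destruct excluded_middle_informative; left; auto.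
Qed.

Lemma ext_cons S l : cons S -> cons (ext S l).
Proof.
  intros HS; induction l; simpl; auto.
  destruct excluded_middle_informative as [H|H]; auto.
  destruct (cons_step _ a IHl); tauto.
Qed.

Lemma ext_mono S l a : forall x, ext S l x -> ext S (a :: l) x.
Proof. intros x H; simpl; destruct excluded_middle_informative; left; auto. Qed.

Lemma ext_max S l : forall phi, In phi l -> ext S l phi \/ ext S l (Neg phi).
Proof.
  induction l as [|a l IH]; simpl; [tauto|].
  intros phi [<-|Hin].
  - destruct excluded_middle_informative; auto.
  - destruct (IH phi Hin); [left|right]; apply (ext_mono S l a); auto.
Qed.

Fixpoint subs (A : form) : list form :=
  match A with
  | Atom p => [Atom p]
  | Bot => [Bot]
  | And B C | Or B C | Imp B C => A :: subs B ++ subs C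
  | Neg B | Box B => A :: subs B
  end.

Lemma subs_refl A : In A (subs A).
Proof. destruct A; simpl; auto. Qed.

Lemma subs_trans A : forall B, In B (subs A) -> forall x, In x (subs B) -> In x (subs A).
Proof.
  induction A; simpl; intros B HB x Hx.
  - destruct HB as [<-|[]]; auto.
  - destruct HB as [<-|[]]; auto.
  - destruct HB as [<-|HB]; [exact Hx|]. right; apply in_app_or in HB; apply in_or_app; destruct HB; eauto.
  - destruct HB as [<-|HB]; [exact Hx|]. right; apply in_app_or in HB; apply in_or_app; destruct HB; eauto.
  - destruct HB as [<-|HB]; [exact Hx|]. right; apply in_app_or in HB; apply in_or_app; destruct HB; eauto.
  - destruct HB as [<-|HB]; [exact Hx|]. right; eauto.
  - destruct HB as [<-|HB]; [exact Hx|]. right; eauto.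
Qed.

Fixpoint forces {W : Type} (R : W -> W -> Prop) (V : nat -> W -> Prop) (w : W) (F : form) : Prop :=
  match F with
  | Atom p => V p w
  | Bot => False
  | And B C => forces R V w B /\ forces R V w C
  | Or B C => forces R V w B \/ forces R V w C
  | Imp B C => forces R V w B -> forces R V w C
  | Neg B => ~ forces R V w B
  | Box B => forall v, R w v -> forces R V v B
  end.

Definition bdec (P : Prop) : bool := if excluded_middle_informative P then true else false.
Lemma bdec_iff P : bdec P = true <-> P.
Proof. unfold bdec; destruct excluded_middle_informative; split; intros; auto; discriminate || tauto. Qed.

Lemma tval_forces {W} R V (w : W) : forall F,
  tval (fun p => bdec (V p w)) (fun B => bdec (forall v, R w v -> forces R V v B)) F = true
  <-> forces R V w F.
Proof.
  induction F; simpl.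
  - apply bdec_iff.
  - split; [discriminate|tauto].
  - rewrite andb_true_iff; tauto.
  - rewrite orb_true_iff; tauto.
  - destruct (tval _ _ F1), (tval _ _ F2); simpl; split; intros; try tauto; try reflexivity;
    try discriminate; exfalso; firstorder congruence.
  - destruct (tval _ _ F); simpl; split; intros; try tauto; try discriminate; firstorder congruence.
  - apply bdec_iff.
Qed.

Lemma GL_sound {W} (R : W -> W -> Prop) V
  (Htr : forall x y z, R x y -> R y z -> R x z)
  (Hwf : well_founded (fun x y => R y x)) F :
  GL_prv F -> forall w, forces R V w F.
Proof.
  induction 1; intros w; simpl.
  - apply tval_forces; apply H.
  - intros H1 H2 v Hv; apply H1; auto.
  - intros H1 v Hv u Hu; apply H1; eauto.
  - intros H v. induction v as [v IH] using (well_founded_ind Hwf). intros Hwv.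
    apply (H v Hwv). intros u Hvu. apply IH; eauto.
  - apply IHGL_prv1, IHGL_prv2.
  - intros; apply IHGL_prv.
Qed.

Section Canon.
Variable A : form.

Definition world (G : form -> Prop) : Prop :=
  cons G /\ forall phi, In phi (subs A) -> G phi \/ G (Neg phi).

Definition Rc (G D : form -> Prop) : Prop :=
  world D /\ forall C, G (Box C) -> D C /\ D (Box C).
Definition Vc (p : nat) (G : form -> Prop) : Prop := G (Atom p).

Lemma Rc_trans G D E : Rc G D -> Rc D E -> Rc G E.
Proof. intros [_ H1] [H2 H3]; split; auto. intros C HC; apply H3, H1, HC. Qed.

Lemma closure G l phi : world G -> (forall x, In x l -> G x) ->
  K4_prv (Imp (conj l) phi) -> In phi (subs A) -> G phi.
Proof.
  intros [Hc Hm] Hl Hp Hin. destruct (Hm phi Hin) as [H|H]; auto.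
  exfalso. apply (Hc (Neg phi :: l)).
  - intros x [<-|Hx]; auto.
  - eapply tmp1; [|exact Hp]. taut_solve.
Qed.

Lemma notboth G phi : world G -> G phi -> G (Neg phi) -> False.
Proof.
  intros [Hc _] H1 H2. apply (Hc [phi; Neg phi]).
  - intros x [<-|[<-|[]]]; auto.
  - apply K4_taut; taut_solve.
Qed.

Lemma box_lemma G B : world G -> G (Neg (Box B)) ->
  cons (fun x => x = Neg B \/ exists C, G (Box C) /\ (x = C \/ x = Box C)).
Proof.
  intros HG HnB l Hl Hp.
  assert (Hgen : forall l, (forall x, In x l ->
      x = Neg B \/ exists C, G (Box C) /\ (x = C \/ x = Box C)) ->
    exists l2, (forall x, In x l2 -> G x) /\
      K4_prv (Imp (conj l2) (Box (Imp (Neg B) (conj l))))).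
  { clear l Hl Hp. induction l as [|x l IH]; intros Hl.
    - exists []; split; [simpl; tauto|].
      eapply tmp1; [|apply K4_nec; apply K4_taut; instantiate (1 := Imp (Neg B) (Neg Bot)); taut_solve].
      taut_solve.
    - destruct IH as [l2 [H1 H2]]. { intros y Hy; apply Hl; simpl; auto. }
      destruct (Hl x (or_introl eq_refl)) as [->|[C [HC [->| ->]]]].
      + exists l2; split; auto.
        assert (K4_prv (Imp (Imp (Neg B) (conj l)) (Imp (Neg B) (conj (Neg B :: l))))) as H3
          by (apply K4_taut; taut_solve).
        apply boxK1 in H3. eapply tmp2; [|exact H2|exact H3]. taut_solve.
      + exists (Box C :: l2); split. { intros y [<-|Hy]; auto. }
        assert (K4_prv (Imp C (Imp (Imp (Neg B) (conj l)) (Imp (Neg B) (conj (C :: l)))))) as H3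
          by (apply K4_taut; taut_solve).
        apply boxK2 in H3. eapply tmp2; [|exact H2|exact H3]. taut_solve.
      + exists (Box C :: l2); split. { intros y [<-|Hy]; auto. }
        assert (K4_prv (Imp (Box C) (Imp (Imp (Neg B) (conj l)) (Imp (Neg B) (conj (Box C :: l)))))) as H3
          by (apply K4_taut; taut_solve).
        apply boxK2 in H3. eapply tmp3; [|exact H2|exact H3|apply (K4_4 C)]. taut_solve. }
  destruct (Hgen l Hl) as [l2 [H1 H2]].
  assert (K4_prv (Imp (Imp (Neg B) (conj l)) B)) as H3.
  { eapply tmp1; [|exact Hp]. taut_solve. }
  apply boxK1 in H3.
  destruct HG as [Hc _]. apply (Hc (Neg (Box B) :: l2)).
  - intros y [<-|Hy]; auto.
  - eapply tmp2; [|exact H2|exact H3]. taut_solve.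
Qed.

Lemma truth : forall phi, In phi (subs A) -> forall G, world G ->
  (forces Rc Vc G phi <-> G phi).
Proof.
  induction phi; intros Hin G HG; simpl.
  - unfold Vc; tauto.
  - split; [tauto|]. intros H. destruct HG as [Hc _]. apply (Hc [Bot]).
    + intros x [<-|[]]; auto.
    + apply K4_taut; taut_solve.
  - assert (I1 : In phi1 (subs A)) by (eapply subs_trans; [exact Hin|simpl; right; apply in_or_app; left; apply subs_refl]).
    assert (I2 : In phi2 (subs A)) by (eapply subs_trans; [exact Hin|simpl; right; apply in_or_app; right; apply subs_refl]).
    rewrite (IHphi1 I1 G HG), (IHphi2 I2 G HG). split.
    + intros [H1 H2]. apply (closure G [phi1; phi2]); auto.
      * intros x [<-|[<-|[]]]; auto.
      * apply K4_taut; taut_solve.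
    + intros H; split; apply (closure G [And phi1 phi2]); auto;
      try (intros x [<-|[]]; auto); apply K4_taut; taut_solve.
  - assert (I1 : In phi1 (subs A)) by (eapply subs_trans; [exact Hin|simpl; right; apply in_or_app; left; apply subs_refl]).
    assert (I2 : In phi2 (subs A)) by (eapply subs_trans; [exact Hin|simpl; right; apply in_or_app; right; apply subs_refl]).
    rewrite (IHphi1 I1 G HG), (IHphi2 I2 G HG). split.
    + intros [H|H]; [apply (closure G [phi1])|apply (closure G [phi2])]; auto;
      try (intros x [<-|[]]; auto); apply K4_taut; taut_solve.
    + intros H. destruct HG as [Hc Hm]. destruct (Hm phi1 I1) as [H1|H1]; [left; auto|right].
      apply (closure G [Or phi1 phi2; Neg phi1]); [split; auto| |apply K4_taut; taut_solve|auto].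
      intros x [<-|[<-|[]]]; auto.
  - assert (I1 : In phi1 (subs A)) by (eapply subs_trans; [exact Hin|simpl; right; apply in_or_app; left; apply subs_refl]).
    assert (I2 : In phi2 (subs A)) by (eapply subs_trans; [exact Hin|simpl; right; apply in_or_app; right; apply subs_refl]).
    rewrite (IHphi1 I1 G HG), (IHphi2 I2 G HG). split.
    + intros H. destruct (proj2 HG phi1 I1) as [H1|H1].
      * apply (closure G [phi2]); auto; [intros x [<-|[]]; auto|apply K4_taut; taut_solve].
      * apply (closure G [Neg phi1]); auto; [intros x [<-|[]]; auto|apply K4_taut; taut_solve].
    + intros H H1. apply (closure G [Imp phi1 phi2; phi1]); auto;
      [intros x [<-|[<-|[]]]; auto|apply K4_taut; taut_solve].
  - assert (I1 : In phi (subs A)) by (eapply subs_trans; [exact Hin|simpl; right; apply subs_refl]).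
    rewrite (IHphi I1 G HG). split.
    + intros H. destruct (proj2 HG phi I1); tauto.
    + intros H H1. eapply notboth; eauto.
  - assert (I1 : In phi (subs A)) by (eapply subs_trans; [exact Hin|simpl; right; apply subs_refl]).
    split.
    + intros H. apply NNPP; intros Hn.
      assert (HnB : G (Neg (Box phi))) by (destruct (proj2 HG _ Hin); tauto).
      pose (S := fun x => x = Neg phi \/ exists C, G (Box C) /\ (x = C \/ x = Box C)).
      pose (D := ext S (subs A)).
      assert (HD : world D).
      { split; [apply ext_cons, box_lemma; auto|]. intros; apply ext_max; auto. }
      assert (HR : Rc G D).
      { split; auto. intros C HC; split; apply ext_sub; right; exists C; auto. }
      apply H in HR. apply (IHphi I1 D HD) in HR.
      apply (notboth D phi HD HR). apply ext_sub; left; reflexivity.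
    + intros H D [HD HR]. apply (IHphi I1 D HD). apply HR, H.
Qed.
End Canon.

Lemma root_cons A : ~ K4_prv A -> cons (fun x => x = Neg A).
Proof.
  intros Hn l Hl Hp. apply Hn.
  assert (K4_prv (Imp (Neg A) (conj l))) as H.
  { clear Hp. induction l as [|x l IH].
    - apply K4_taut; taut_solve.
    - rewrite (Hl x (or_introl eq_refl)).
      eapply tmp1; [|apply IH; intros; apply Hl; simpl; auto]. taut_solve. }
  eapply tmp2; [|exact Hp|exact H]. taut_solve.
Qed.

Lemma boxes_below_mono T : forall b b', b <= b' -> boxes_below b T -> boxes_below b' T.
Proof. induction T; simpl; intros; intuition (eauto; lia). Qed.

Lemma boxes_exists T : exists b, boxes_below b T.
Proof.
  induction T; simpl.
  - exists 0; exact I.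
  - exists 0; exact I.
  - destruct IHT1 as [b1 H1], IHT2 as [b2 H2]; exists (Nat.max b1 b2); split;
       [apply (boxes_below_mono _ b1)|apply (boxes_below_mono _ b2)]; auto; lia.
  - destruct IHT1 as [b1 H1], IHT2 as [b2 H2]; exists (Nat.max b1 b2); split;
       [apply (boxes_below_mono _ b1)|apply (boxes_below_mono _ b2)]; auto; lia.
  - destruct IHT1 as [b1 H1], IHT2 as [b2 H2]; exists (Nat.max b1 b2); split;
       [apply (boxes_below_mono _ b1)|apply (boxes_below_mono _ b2)]; auto; lia.
  - destruct IHT as [b H]; exists b; auto.
  - destruct IHT as [b H]; exists (Nat.max b (S n)); split; [lia|]. apply (boxes_below_mono _ b); auto; lia.
Qed.

Section Transl.
Variable W : Type.
Variable R : W -> W -> Prop.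
Variable V : nat -> W -> Prop.
Variable q : nat -> nat.
Hypothesis Hinj : forall i j, q i = q j -> i = j.

Definition R' (x y : W * nat) : Prop := R (fst x) (fst y) /\ snd y < snd x.
Definition V' (p : nat) (x : W * nat) : Prop :=
  (exists i, q i = p /\ i < snd x) \/ ((forall i, q i <> p) /\ V p (fst x)).

Lemma bigconj_ok n : forall v j, forces R' V' (v, j) (bigconj q n) <-> n < j.
Proof.
  induction n; intros v j; simpl.
  - unfold V'; simpl. split.
    + intros [[i [H1 H2]]|[H1 _]]; [apply Hinj in H1; lia|exfalso; apply (H1 0); auto].
    + intros; left; exists 0; auto.
  - rewrite IHn. unfold V'; simpl. split.
    + intros [H [[i [H1 H2]]|[H1 _]]]; [apply Hinj in H1; lia|exfalso; apply (H1 (S n)); auto].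
    + intros; split; [lia|left; exists (S n); auto].
Qed.

Lemma transl_ok T : wf_transl T -> (forall i, ~ occurs (q i) (erase T)) ->
  forall b, boxes_below b T -> forall w k, b < k ->
  (forces R' V' (w, k) (apply_transl q T) <-> forces R V w (erase T)).
Proof.
  induction T; simpl; intros Hwf Hocc b Hb w k Hk.
  - unfold V'; simpl. split.
    + intros [[i [H1 _]]|[_ H]]; [exfalso; apply (Hocc i); auto|auto].
    + intros H; right; split; [intros i Hi; apply (Hocc i); auto|exact H].
  - tauto.
  - rewrite IHT1, IHT2; try tauto; try (intros i Hi; apply (Hocc i); tauto); eauto; tauto.
  - rewrite IHT1, IHT2; try tauto; try (intros i Hi; apply (Hocc i); tauto); eauto; tauto.
  - rewrite IHT1, IHT2; try tauto; try (intros i Hi; apply (Hocc i); tauto); eauto; tauto.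
  - rewrite IHT; eauto; tauto.
  - destruct Hwf as [Hbn Hwf]. destruct Hb as [Hnb Hb]. split.
    + intros H v Hv. apply (IHT Hwf Hocc n Hbn v (S n)); [lia|].
      apply (H (v, S n)); [split; simpl; auto; lia|]. apply bigconj_ok; lia.
    + intros H [v j] [Hv Hj] Hc. simpl in *. apply bigconj_ok in Hc.
      apply (IHT Hwf Hocc n Hbn v j); auto.
Qed.

End Transl.

Theorem theorem4p3 (A : form) (t : aform) (q : nat -> nat) :
  (forall i j, q i = q j -> i = j) ->
  (forall i, ~ occurs (q i) A) ->
  translation_for A t ->
  GL_prv (apply_transl q t) ->
  K4_prv A.
Proof.
  intros Hinj Hocc [Her Hwf] Hgl.
  apply NNPP; intros Hn.
  pose (G0 := ext (fun x => x = Neg A) (subs A)).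
  assert (HG0 : world A G0).
  { split; [apply ext_cons, root_cons; auto|]. intros; apply ext_max; auto. }
  assert (HnA : G0 (Neg A)) by (apply ext_sub; reflexivity).
  destruct (boxes_exists t) as [b Hb].
  assert (Htr : forall x y z, R' _ (Rc A) x y -> R' _ (Rc A) y z -> R' _ (Rc A) x z).
  { intros [x i] [y j] [z l] [H1 H2] [H3 H4]; unfold R' in *; simpl in *; split; [apply (Rc_trans A x y z); auto|lia]. }
  assert (Hwfr : well_founded (fun x y => R' _ (Rc A) y x)).
  { apply (wf_incl _ _ (fun x y => snd x < snd y)).
    + intros x y [_ H]; exact H.
    + apply (wf_inverse_image _ nat lt snd), lt_wf. }
  pose proof (GL_sound (R' _ (Rc A)) (V' _ Vc q) Htr Hwfr _ Hgl (G0, S b)) as Hf.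
  subst A. apply (transl_ok _ (Rc (erase t)) Vc q Hinj t Hwf Hocc b Hb G0 (S b)) in Hf; [|lia].
  apply (truth (erase t) (erase t) (subs_refl _) G0 HG0) in Hf.
  eapply notboth; eauto.
Qed.
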